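(* Let $n\ge3$ and $0<q<1$. For every relationship network $G$ on $V$ satisfying structural balance, the duples mechanism selects a needy agent with probability $$P_D(G)\ \ge\ q+q(1-q)\,\frac{3n-8}{8(n-1)}.$$
   Context: A relationship network $G$ on $V=\{1,\dots,n\}$ assigns to every unordered pair of distinct agents exactly one of the symmetric relations friends, enemies, impartial; $F_j,E_j,I_j$ are the friends, enemies, impartials of $j$. Structural balance: for all pairwise distinct $i,j,k$: $j\in F_i,k\in F_j\Rightarrow k\in F_i$; $j\in E_i,k\in E_j\Rightarrow k\in F_i$; $j\in E_i,k\in F_j\Rightarrow k\in E_i$. Each agent is needy independently with probability $q$; $N$ is the random needy set; every agent $j$ reports truthfully $(N,F_j,E_j)$. Duples mechanism $g^D$: for agent $l$ and $j\ne l$, $\mathrm{lev}_l(j)=1,\dots,6$ according as $j\in F_l\cap N$, $F_l\setminus N$, $I_l\cap N$, $I_l\setminus N$, $E_l\cap N$, $E_l\setminus N$. For distinct $j,k$, agent $l\notin\{j,k\}$ votes for $j$ against $k$ if $\mathrm{lev}_l(j)<\mathrm{lev}_l(k)$ (abstains if equal); $x_{jk}$ counts these votes. $g^D_j(\{j,k\})=1,\tfrac12,0$ as $x_{jk}>,=,<x_{kj}$, $g^D_k(\{j,k\})=1-g^D_j(\{j,k\})$, and $g^D_i=\frac{2}{n(n-1)}\sum_{j\ne i}g^D_i(\{i,j\})$. $P_D(G)=\mathbb E[\sum_{i\in N}g^D_i]$ under truthful reports. *)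

(* Defs.v *)
From HB Require Import structures.
From mathcomp Require Import all_boot all_order all_algebra.
Set Implicit Arguments. Unset Strict Implicit. Unset Printing Implicit Defensive.
Import Order.TTheory GRing.Theory Num.Theory.

Inductive relation3 := Friends | Enemies | Impartial.

(* A relationship network on V = 'I_n : the relation of the unordered pair
   {i,j} (i <> j); diagonal values are irrelevant. *)
Definition network (n : nat) := 'I_n -> 'I_n -> relation3.

Definition symmetric_network n (G : network n) : Prop :=
  forall i j : 'I_n, i != j -> G i j = G j i.

Definition structurally_balanced n (G : network n) : Prop :=
  forall i j k : 'I_n, i != j -> j != k -> i != k ->
    [/\ (G i j = Friends -> G j k = Friends -> G i k = Friends),
        (G i j = Enemies -> G j k = Enemies -> G i k = Friends) &
        (G i j = Enemies -> G j k = Friends -> G i k = Enemies)].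

Definition lev n (G : network n) (N : {set 'I_n}) (l j : 'I_n) : nat :=
  match G l j with
  | Friends => if j \in N then 1 else 2
  | Impartial => if j \in N then 3 else 4
  | Enemies => if j \in N then 5 else 6
  end.

Definition votes n (G : network n) (N : {set 'I_n}) (j k : 'I_n) : nat :=
  #|[set l : 'I_n | (l != j) && (l != k) && (lev G N l j < lev G N l k)%N]|.

Local Open Scope ring_scope.

Definition gpair (R : fieldType) n (G : network n) (N : {set 'I_n}) (j k : 'I_n) : R :=
  let a := votes G N j k in let b := votes G N k j in
  if (b < a)%N then 1 else if a == b then 2^-1 else 0.

Definition gD (R : fieldType) n (G : network n) (N : {set 'I_n}) (i : 'I_n) : R :=
  (2 / (n%:R * (n%:R - 1))) * \sum_(j : 'I_n | j != i) gpair R G N i j.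

Definition probN (R : fieldType) n (q : R) (N : {set 'I_n}) : R :=
  q ^+ #|N| * (1 - q) ^+ (n - #|N|).

(* P_D(G) = E[ sum_{i in N} g^D_i ] under truthful reports. *)
Definition PD (R : fieldType) n (q : R) (G : network n) : R :=
  \sum_(N : {set 'I_n}) probN q N * \sum_(i in N) gD R G N i.

(* Main.v *)
Require Import Defs.
From HB Require Import structures.
From mathcomp Require Import all_boot all_order all_algebra.
From mathcomp Require Import zify ring lra.
Import Order.TTheory GRing.Theory Num.Theory.
Set Implicit Arguments. Unset Strict Implicit. Unset Printing Implicit Defensive.

Lemma sum_bool_card (T : finType) (W : {set T}) (P : pred T) :
  (\sum_(v in W) (P v : nat))%N = #|[set v in W | P v]|.
Proof.
rewrite -sum1_card big_mkcond /= [RHS]big_mkcond /=.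
apply: eq_bigr => v _; rewrite inE; by case: (v \in W); case: (P v).
Qed.

Lemma mantel (T : finType) (W : {set T}) (r : rel T) :
  (forall u v, r u v -> r v u) ->
  (forall u v w, u \in W -> v \in W -> w \in W -> r u v -> r v w -> r u w -> False) ->
  (2 * (\sum_(u in W) #|[set v in W | r u v]|) <= #|W| ^ 2)%N.
Proof.
move=> rsym tf.
set d := fun u => #|[set v in W | r u v]|.
set E := (\sum_(u in W) d u)%N.
have step1 : forall u v, u \in W -> v \in W -> r u v -> (d u + d v <= #|W|)%N.
  move=> u v uW vW ruv.
  rewrite /d -cardsUI.
  have -> : [set v0 in W | r u v0] :&: [set v0 in W | r v v0] = set0.
    apply/setP => w; rewrite !inE.
    apply/negbTE/negP => /andP[/andP[wW ruw] /andP[_ rvw]].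
    exact: (tf u v w uW vW wW ruv rvw ruw).
  rewrite cards0 addn0; apply: subset_leq_card.
  by apply/subsetP => w; rewrite !inE => /orP[/andP[]|/andP[]].
have dsum : forall u, (\sum_(v in W) (r u v : nat))%N = d u.
  by move=> u; rewrite sum_bool_card.
have dsum' : forall v, (\sum_(u in W) (r u v : nat))%N = d v.
  move=> v; rewrite sum_bool_card /d; apply: eq_card => w; rewrite !inE.
  by apply/andP/andP => -[-> /rsym].
have step2 : (2 * \sum_(u in W) d u * d u <= #|W| * E)%N.
  have H1 : (\sum_(u in W) \sum_(v in W) (r u v : nat) * (d u + d v)
            <= \sum_(u in W) \sum_(v in W) (r u v : nat) * #|W|)%N.
    apply: leq_sum => u uW; apply: leq_sum => v vW.
    case ruv: (r u v); rewrite ?mul0n // !mul1n; exact: step1.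
  have L : (\sum_(u in W) \sum_(v in W) (r u v : nat) * (d u + d v)
           = 2 * \sum_(u in W) d u * d u)%N.
    under eq_bigr => u _ do under eq_bigr => v _ do rewrite mulnDr.
    under eq_bigr => u _ do rewrite big_split /=.
    rewrite big_split /= [X in (_ + X)%N]exchange_big /=.
    rewrite mul2n -addnn; congr (_ + _)%N.
      apply: eq_bigr => u _; rewrite -big_distrl /= dsum //.
    apply: eq_bigr => v _; rewrite -big_distrl /= dsum' //.
  have Rr : (\sum_(u in W) \sum_(v in W) (r u v : nat) * #|W| = #|W| * E)%N.
    rewrite /E big_distrr /=; apply: eq_bigr => u _.
    by rewrite -big_distrl /= dsum mulnC.
  by rewrite -L -Rr.
have step3 : (E * E <= #|W| * \sum_(u in W) d u * d u)%N.
  have H : (\sum_(u in W) \sum_(v in W) 2 * (d u * d v)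
           <= \sum_(u in W) \sum_(v in W) (d u * d u + d v * d v))%N.
    apply: leq_sum => u _; apply: leq_sum => v _.
    have [H _] := nat_Cauchy (d u) (d v). by rewrite !mulnn.
  have L : (\sum_(u in W) \sum_(v in W) 2 * (d u * d v) = 2 * (E * E))%N.
    rewrite /E; under eq_bigr => u _ do rewrite -big_distrr /= -big_distrr /=.
    by rewrite -big_distrr /= -big_distrl /=.
  have Rr : (\sum_(u in W) \sum_(v in W) (d u * d u + d v * d v)
            = 2 * (#|W| * \sum_(u in W) d u * d u))%N.
    under eq_bigr => u _ do rewrite big_split /=.
    rewrite big_split /= [X in (X + _)%N]exchange_big /= !sum_nat_const.
    by rewrite mul2n -addnn.
  by rewrite L Rr leq_mul2l /= in H.
have E2 : (2 * (E * E) <= #|W| * (#|W| * E))%N.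
  apply: (leq_trans (n := #|W| * (2 * \sum_(u in W) d u * d u))).
    by rewrite [X in (_ <= X)%N]mulnCA leq_mul2l step3 orbT.
  by rewrite leq_mul2l step2 orbT.
case: (posnP E) => [->|Epos]; first by rewrite muln0.
rewrite -/E -mulnn.
have E3 : (2 * E * E <= #|W| * #|W| * E)%N by move: E2; rewrite !mulnA.
by rewrite leq_pmul2r in E3.
Qed.

Definition r3_code (r : relation3) : nat :=
  match r with Friends => 0 | Impartial => 1 | Enemies => 2 end.
Definition r3_decode (k : nat) : relation3 :=
  match k with 0 => Friends | 1 => Impartial | _ => Enemies end.
Lemma r3K : cancel r3_code r3_decode. Proof. by case. Qed.
HB.instance Definition _ := Equality.copy relation3 (can_type r3K).

Definition cat n (G : network n) (l x : 'I_n) : nat :=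
  match G l x with Friends => 0 | Impartial => 1 | Enemies => 2 end.
Definition Aset n (G : network n) (i j : 'I_n) : {set 'I_n} :=
  [set l | (l != i) && (l != j) && (cat G l i < cat G l j)%N].
Definition domi n (G : network n) (i j : 'I_n) : bool := (n - 2 <= 2 * #|Aset G i j|)%N.
Definition badr n (G : network n) (i j : 'I_n) : bool := (i != j) && (domi G i j || domi G j i).
Definition Fr n (G : network n) (i : 'I_n) : {set 'I_n} := [set l | (l != i) && (G l i == Friends)].
Definition bigA n (G : network n) (i : 'I_n) : bool := (n - 2 <= 2 * #|Fr G i|)%N.
Definition Cl n (G : network n) (i : 'I_n) : {set 'I_n} := [set l | (l == i) || (G l i == Friends)].

Lemma bal1 n (G : network n) i j k : structurally_balanced G -> i != j -> j != k -> i != k ->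
  G i j = Friends -> G j k = Friends -> G i k = Friends.
Proof. by move=> sb ij jk ik; case: (sb i j k ij jk ik). Qed.
Lemma bal2 n (G : network n) i j k : structurally_balanced G -> i != j -> j != k -> i != k ->
  G i j = Enemies -> G j k = Enemies -> G i k = Friends.
Proof. by move=> sb ij jk ik; case: (sb i j k ij jk ik). Qed.
Lemma bal3 n (G : network n) i j k : structurally_balanced G -> i != j -> j != k -> i != k ->
  G i j = Enemies -> G j k = Friends -> G i k = Enemies.
Proof. by move=> sb ij jk ik; case: (sb i j k ij jk ik). Qed.

Lemma friends_Aset n (G : network n) i j : symmetric_network G -> structurally_balanced G ->
  i != j -> G i j = Friends -> Aset G i j = set0.
Proof.
move=> sy sb ij Gij; apply/setP => l; rewrite !inE; apply/negbTE/negP.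
case/andP => /andP[li lj]; rewrite /cat.
case Eli: (G l i); case Elj: (G l j) => //= _.
- by rewrite (bal1 sb li ij lj Eli Gij) in Elj.
- by rewrite (bal1 sb li ij lj Eli Gij) in Elj.
- have ji : j != i by rewrite eq_sym.
  have Gji : G j i = Friends by rewrite -sy.
  by rewrite (bal3 sb lj ji li Elj Gji) in Eli.
Qed.

Lemma enemy_Aset n (G : network n) i j : symmetric_network G -> structurally_balanced G ->
  i != j -> G i j = Enemies -> Aset G i j \subset Fr G i.
Proof.
move=> sy sb ij Gij; apply/subsetP => l; rewrite !inE /cat.
case/andP => /andP[li lj].
case Eli: (G l i); case Elj: (G l j) => //= _; rewrite ?li //.
have ji : j != i by rewrite eq_sym.
have Gji : G j i = Enemies by rewrite -sy.
by rewrite (bal2 sb lj ji li Elj Gji) in Eli.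
Qed.

Lemma card3 n (i j k : 'I_n) : i != j -> j != k -> i != k -> #|[set i; j; k]| = 3.
Proof.
move=> ij jk ik; rewrite -setUA cardsU1 cards2 jk !inE negb_or ij ik.
by [].
Qed.

Lemma triangle n (G : network n) i j k : symmetric_network G -> structurally_balanced G ->
  i != j -> j != k -> i != k ->
  G i j = Impartial -> G j k = Impartial -> G i k = Impartial ->
  domi G i j -> domi G j k -> False.
Proof.
move=> sy sb ij jk ik Gij Gjk Gik; rewrite /domi => d1 d2.
have disj : Aset G i j :&: Aset G j k = set0.
  apply/setP => l; rewrite !inE /cat; apply/negbTE/negP.
  case/andP => /andP[/andP[li lj] c1] /andP[/andP[_ lk] c2].
  move: c1 c2.
  case Eli: (G l i); case Elj: (G l j); case Elk: (G l k) => //= _ _.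
  have kl : k != l by rewrite eq_sym.
  have Gkl : G k l = Enemies by rewrite sy.
  have ki : k != i by rewrite eq_sym.
  have := bal3 sb kl li ki Gkl Eli.
  by rewrite -sy // Gik.
have sub : Aset G i j :|: Aset G j k \subset ~: [set i; j; k].
  apply/subsetP => l; rewrite !inE /cat => /orP[] /andP[/andP[li lj] c].
    rewrite (negbTE li) (negbTE lj) /=; apply/negP => /eqP lk; move: c; rewrite lk.
    by rewrite (sy k i) 1?eq_sym // Gik (sy k j) 1?eq_sym // Gjk.
  rewrite (negbTE li) (negbTE lj) !orbF /=; apply/negP => /eqP li'; move: c; rewrite li'.
  by rewrite Gij Gik.
have H1 := subset_leq_card sub.
have := cardsUI (Aset G i j) (Aset G j k); rewrite disj cards0 addn0 => U.
have := cardsC [set i; j; k]; rewrite card3 // card_ord => C.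
rewrite U in H1.
have key : forall a b c m : nat,
  (a + b <= c -> 3 + c = m -> m - 2 <= 2 * a -> m - 2 <= 2 * b -> False)%N
  by move=> a b c m; lia.
exact: (key _ _ _ _ H1 C d1 d2).
Qed.

Lemma tourn n (G : network n) i j k : symmetric_network G -> structurally_balanced G ->
  i != j -> j != k -> i != k ->
  G i j = Impartial -> G j k = Impartial -> G i k = Impartial ->
  domi G i j || domi G j i -> domi G j k || domi G k j -> domi G i k || domi G k i -> False.
Proof.
move=> sy sb ij jk ik Gij Gjk Gik.
have ji : j != i by rewrite eq_sym.
have kj : k != j by rewrite eq_sym.
have ki : k != i by rewrite eq_sym.
have Gji : G j i = Impartial by rewrite -sy.
have Gkj : G k j = Impartial by rewrite -sy.
have Gki : G k i = Impartial by rewrite -sy.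
have T := triangle sy sb.
case/orP => a; case/orP => b; case/orP => c.
- exact: (T i j k).
- exact: (T i j k).
- exact: (T i k j).
- exact: (T k i j).
- exact: (T j i k).
- exact: (T j k i).
- exact: (T k j i).
- exact: (T k j i).
Qed.

Lemma friends_notbad n (G : network n) i j : (3 <= n)%N -> symmetric_network G ->
  structurally_balanced G -> i != j -> G i j = Friends -> ~~ badr G i j.
Proof.
move=> n3 sy sb ij Gij; rewrite /badr /domi negb_and negb_or; apply/orP; right.
have ji : j != i by rewrite eq_sym.
have Gji : G j i = Friends by rewrite -sy.
rewrite (friends_Aset sy sb ij Gij) (friends_Aset sy sb ji Gji) cards0.
apply/andP; split; rewrite -ltnNge; lia.
Qed.

Lemma enemy_bad_big n (G : network n) i j : symmetric_network G ->
  structurally_balanced G -> G i j = Enemies -> badr G i j -> bigA G i || bigA G j.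
Proof.
move=> sy sb Gij /andP[ij /orP[d|d]].
  apply/orP; left; apply: (leq_trans d); rewrite leq_mul2l; apply/orP; right.
  exact/subset_leq_card/enemy_Aset.
have ji : j != i by rewrite eq_sym.
have Gji : G j i = Enemies by rewrite -sy.
apply/orP; right; apply: (leq_trans d); rewrite leq_mul2l; apply/orP; right.
exact/subset_leq_card/enemy_Aset.
Qed.

Lemma Cl_friend n (G : network n) j x y : symmetric_network G ->
  structurally_balanced G -> x \in Cl G j -> y \in Cl G j -> x != y -> G x y = Friends.
Proof.
move=> sy sb; rewrite !inE => Hx Hy xy.
case: (eqVneq x j) => [xj|xj].
  subst x; case/orP: Hy => [/eqP yj|/eqP yj]; first by rewrite yj eqxx in xy.
  by rewrite sy // eq_sym.
case: (eqVneq y j) => [yj|yj].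
  by subst y; case/orP: Hx => /eqP // E; rewrite E eqxx in xj.
have Gxj : G x j = Friends by case/orP: Hx => /eqP // E; rewrite E eqxx in xj.
have Gjy : G j y = Friends by rewrite sy 1?eq_sym //; case/orP: Hy => /eqP // E; rewrite E eqxx in yj.
by apply: (bal1 sb xj _ xy Gxj Gjy); rewrite eq_sym.
Qed.

Lemma Cl_card n (G : network n) j : #|Cl G j| = (#|Fr G j| + 1)%N.
Proof.
have -> : Cl G j = j |: Fr G j.
  apply/setP => l; rewrite !inE; by case: (eqVneq l j).
by rewrite cardsU1 !inE eqxx /= addnC.
Qed.

Lemma Cl_disj n (G : network n) j v w : symmetric_network G ->
  structurally_balanced G -> v \notin Cl G j -> w \in Cl G v -> w \notin Cl G j.
Proof.
move=> sy sb vC wv; apply/negP => wj; move/negP: vC; apply.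
case: (eqVneq v w) => [->//|vw].
have Gvw : G v w = Friends by apply: (@Cl_friend _ G v) => //; rewrite /Cl inE eqxx.
case: (eqVneq w j) => [wj'|wj'].
  by rewrite /Cl inE -wj' Gvw eqxx orbT.
have Gwj : G w j = Friends by rewrite /Cl inE (negbTE wj') /= in wj; exact/eqP.
case: (eqVneq v j) => [->|vj]; first by rewrite /Cl inE eqxx.
by rewrite /Cl inE (bal1 sb vw wj' vj Gvw Gwj) eqxx orbT.
Qed.

Lemma badr_sym n (G : network n) u v : badr G u v -> badr G v u.
Proof. by rewrite /badr eq_sym orbC. Qed.

Lemma tf_gen n (G : network n) (W : {set 'I_n}) : (3 <= n)%N -> symmetric_network G ->
  structurally_balanced G ->
  (forall x y, x \in W -> y \in W -> G x y = Enemies -> badr G x y -> False) ->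
  forall u v w, u \in W -> v \in W -> w \in W ->
  badr G u v -> badr G v w -> badr G u w -> False.
Proof.
move=> n3 sy sb H u v w uW vW wW buv bvw buw.
have imp : forall x y, x \in W -> y \in W -> badr G x y -> G x y = Impartial.
  move=> x y xW yW bxy; have xy : x != y by case/andP: bxy.
  case Exy: (G x y) => //.
    by move: (friends_notbad n3 sy sb xy Exy); rewrite bxy.
  by case: (H x y xW yW Exy bxy).
have uv : u != v by case/andP: buv.
have vw : v != w by case/andP: bvw.
have uw : u != w by case/andP: buw.
apply: (tourn sy sb uv vw uw (imp _ _ uW vW buv) (imp _ _ vW wW bvw) (imp _ _ uW wW buw)).
- by case/andP: buv.
- by case/andP: bvw.
- by case/andP: buw.
Qed.

Lemma bad_bound n (G : network n) : (3 <= n)%N -> symmetric_network G ->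
  structurally_balanced G ->
  (8 * \sum_(i : 'I_n) #|[set j | badr G i j]| <= 5 * n ^ 2)%N.
Proof.
move=> n3 sy sb.
case: (boolP [exists j, bigA G j]) => [/existsP[j bj]|nob].
- set C := Cl G j. set W := ~: C.
  have cC : (n <= 2 * #|C|)%N.
    rewrite /C Cl_card; move: bj; rewrite /bigA; lia.
  have cW : (#|C| + #|W| = n)%N by rewrite cardsC card_ord.
  have tfW : forall u v w, u \in W -> v \in W -> w \in W ->
      badr G u v -> badr G v w -> badr G u w -> False.
    apply: tf_gen => // x y xW yW Gxy bxy.
    have key : forall x y, x \in W -> y \in W -> G x y = Enemies -> badr G x y ->
        bigA G x -> False.
      move=> x' y' xW' yW' Gxy' bxy' bx.
      have sub : Cl G x' \subset W.
        apply/subsetP => w' wx; rewrite /W inE; apply: (Cl_disj sy sb _ wx).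
        by rewrite -(in_setC) .
      have eqW : Cl G x' = W.
        apply/eqP; rewrite eqEcard sub /=.
        have := Cl_card G x'; move: bx cC cW; rewrite /bigA.
        move: #|Cl G x'| #|Fr G x'| #|C| #|W| => a b c d; lia.
      have : y' \in Cl G x' by rewrite eqW.
      rewrite /Cl inE => /orP[/eqP E|/eqP E].
        by case/andP: bxy'; rewrite E eqxx.
      have xy' : x' != y' by case/andP: bxy'.
      by rewrite (sy x' y' xy') E in Gxy'.
    case/orP: (enemy_bad_big sy sb Gxy bxy) => bb.
      exact: (key x y).
    apply: (key y x) => //; last exact: badr_sym.
    by rewrite sy // ; case/andP: bxy; rewrite eq_sym.
  have M := mantel (badr_sym (G := G)) tfW.
  rewrite (bigID (mem C)) /=.
  have h1 : (\sum_(i | i \in C) #|[set j0 | badr G i j0]| <= #|C| * #|W|)%N.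
    rewrite -sum_nat_const; apply: leq_sum => i iC; apply: subset_leq_card.
    apply/subsetP => k; rewrite in_set /W in_setC => bik; apply/negP => kC.
    have ik : i != k by case/andP: bik.
    have := friends_notbad n3 sy sb ik (Cl_friend sy sb iC kC ik).
    by rewrite bik.
  have h2 : (\sum_(i | ~~ (i \in C)) #|[set j0 | badr G i j0]|
      <= #|W| * #|C| + \sum_(u in W) #|[set v in W | badr G u v]|)%N.
    have -> : (\sum_(i | ~~ (i \in C)) #|[set j0 | badr G i j0]|
        = \sum_(i in W) #|[set j0 | badr G i j0]|)%N.
      by apply: eq_bigl => i; rewrite /W in_setC.
    rewrite -sum_nat_const -big_split /=.
    apply: leq_sum => i iW.
    have [U _] := leq_card_setU C [set v in W | badr G i v].
    apply: leq_trans U; apply: subset_leq_card; apply/subsetP => k.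
    rewrite [k \in [set _ | _]]in_set => bik; rewrite in_setU; apply/orP.
    case: (boolP (k \in C)) => kC; [by left | right].
    by rewrite in_set /W in_setC kC bik.
  move: h1 h2 M cC cW.
  move: (\sum_(i | i \in C) _)%N (\sum_(i | ~~ (i \in C)) _)%N (\sum_(u in W) _)%N #|C| #|W| => a b d c w.
  move=> h1 h2 M cC cW.
  have key : (8 * (a + b) <= 16 * c * w + 4 * w ^ 2)%N by nia.
  apply: (leq_trans key); rewrite -cW; nia.
- have tfT : forall u v w, u \in [set: 'I_n] -> v \in [set: 'I_n] -> w \in [set: 'I_n] ->
      badr G u v -> badr G v w -> badr G u w -> False.
    apply: tf_gen => // x y _ _ Gxy bxy.
    move/existsPn: nob => nob.
    by case/orP: (enemy_bad_big sy sb Gxy bxy) => bb; [move: (nob x) | move: (nob y)]; rewrite bb.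
  have M := mantel (badr_sym (G := G)) tfT.
  have E : (\sum_(u in [set: 'I_n]) #|[set v in [set: 'I_n] | badr G u v]|
      = \sum_(i : 'I_n) #|[set j | badr G i j]|)%N.
    apply: eq_big => [u|u _]; first by rewrite in_setT.
    by apply: eq_card => v; rewrite !inE.
  rewrite E cardsT card_ord in M.
  move: M; move: (\sum_(i : 'I_n) _)%N => a; lia.
Qed.

Local Open Scope ring_scope.

Lemma sum_sets_prod (R : comNzRingType) (T : finType) (phi : T -> bool -> R) :
  \sum_(N : {set T}) \prod_(x : T) phi x (x \in N) = \prod_(x : T) (phi x true + phi x false).
Proof.
have -> : \prod_(x : T) (phi x true + phi x false) = \prod_(x : T) \sum_(b : bool) phi x b.
  by apply: eq_bigr => x _; rewrite big_bool.
rewrite bigA_distr_bigA /=.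
rewrite (reindex (fun f : {ffun T -> bool} => [set x | f x])) /=.
  by apply: eq_bigr => f _; apply: eq_bigr => x _; rewrite inE.
exists (fun N : {set T} => [ffun x => x \in N]) => [f _|N _].
  by apply/ffunP => x; rewrite ffunE inE.
by apply/setP => x; rewrite inE ffunE.
Qed.

Lemma probN_prod (R : fieldType) n (q : R) (N : {set 'I_n}) :
  probN q N = \prod_(x : 'I_n) (if x \in N then q else 1 - q).
Proof.
rewrite (bigID (mem N)) /=.
rewrite (eq_bigr (fun _ => q)); last by move=> x ->.
rewrite [X in _ * X](eq_bigr (fun _ => 1 - q)); last by move=> x xN; rewrite (negbTE xN).
rewrite !prodr_const /probN.
have -> : #|[pred x | ~~ (x \in N)]| = #|~: N|.
  by apply: eq_card => x; rewrite !inE.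
have C : #|~: N| = (n - #|N|)%N.
  have key : forall a c m : nat, (a + c = m -> c = m - a)%N by move=> *; lia.
  by apply: key; rewrite cardsC card_ord.
by rewrite C.
Qed.

Definition wq (R : fieldType) (q : R) (b : bool) : R := if b then q else 1 - q.

Lemma marginal (R : fieldType) n (q : R) (i j : 'I_n) (bi bj : bool) : i != j ->
  \sum_(N : {set 'I_n}) probN q N * (((i \in N) == bi) && ((j \in N) == bj))%:R
  = wq q bi * wq q bj.
Proof.
move=> ij.
pose phi := fun (x : 'I_n) (b : bool) =>
  wq q b * (if x == i then (b == bi)%:R else 1) * (if x == j then (b == bj)%:R else 1).
have E1 : forall N : {set 'I_n}, probN q N * (((i \in N) == bi) && ((j \in N) == bj))%:R
     = \prod_x phi x (x \in N).
  move=> N; rewrite /phi !big_split /= probN_prod.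
  rewrite -!(big_mkcond (fun x => x == _)) !big_pred1_eq -mulrA -natrM mulnb.
  by congr (_ * _); apply: eq_bigr => x _; rewrite /wq.
rewrite (eq_bigr _ (fun N _ => E1 N)) sum_sets_prod.
rewrite (bigD1 i) // (bigD1 j) /=; last by rewrite eq_sym.
rewrite big1 ?mulr1.
  have ji : (j == i) = false by rewrite eq_sym (negbTE ij).
  rewrite /phi !eqxx (negbTE ij) ji.
  by clear E1 phi; case: bi; case: bj; rewrite /wq /= !(mulr1, mulr0, addr0, add0r).
move=> x /andP[xi xj]; rewrite /phi (negbTE xi) (negbTE xj) /wq !mulr1.
by rewrite addrC subrK.
Qed.

Lemma lev_dep n (G : network n) (N N' : {set 'I_n}) l x :
  (x \in N) = (x \in N') -> lev G N l x = lev G N' l x.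
Proof. by move=> H; rewrite /lev H. Qed.

Lemma votes_dep n (G : network n) (N N' : {set 'I_n}) i j :
  (i \in N) = (i \in N') -> (j \in N) = (j \in N') -> votes G N i j = votes G N' i j.
Proof.
move=> Hi Hj; rewrite /votes; apply: eq_card => l; rewrite !inE.
by rewrite (lev_dep G l Hi) (lev_dep G l Hj).
Qed.

Lemma gpair_dep (R : fieldType) n (G : network n) (N N' : {set 'I_n}) i j :
  (i \in N) = (i \in N') -> (j \in N) = (j \in N') -> gpair R G N i j = gpair R G N' i j.
Proof. by move=> Hi Hj; rewrite /gpair (votes_dep G Hi Hj) (votes_dep G Hj Hi). Qed.

Lemma levTF n (G : network n) (N : {set 'I_n}) l i j : i \in N -> j \notin N ->
  ((lev G N l i < lev G N l j) = (cat G l i <= cat G l j))%N /\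
  ((lev G N l j < lev G N l i) = (cat G l j < cat G l i))%N.
Proof.
move=> iN jN; rewrite /lev /cat iN (negbTE jN).
by case: (G l i); case: (G l j).
Qed.

Lemma votes_TF1 n (G : network n) (N : {set 'I_n}) i j : i \in N -> j \notin N ->
  votes G N j i = #|Aset G j i|.
Proof.
move=> iN jN; rewrite /votes /Aset; apply: eq_card => l; rewrite !inE.
by rewrite (levTF G l iN jN).2.
Qed.

Lemma votes_TF2 n (G : network n) (N : {set 'I_n}) i j : i \in N -> j \notin N -> i != j ->
  (votes G N i j + votes G N j i = n - 2)%N.
Proof.
move=> iN jN ij; rewrite /votes.
set A := [set l | _]. set B := [set l | _].
have disj : A :&: B = set0.
  apply/setP => l; rewrite !inE (levTF G l iN jN).1 (levTF G l iN jN).2.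
  apply/negbTE/negP => /and3P[/andP[_ h1] _ h2].
  by move: h2; rewrite ltnNge h1.
have U : A :|: B = ~: [set i; j].
  apply/setP => l; rewrite !inE (levTF G l iN jN).1 (levTF G l iN jN).2.
  by case: (l == i); case: (l == j); rewrite //= leqNgt orNb.
have := cardsUI A B; rewrite disj cards0 addn0 U => <-.
have := cardsC [set i; j]; rewrite cards2 ij card_ord.
have key : forall c m : nat, (2 + c = m -> c = m - 2)%N by move=> *; lia.
by move/key.
Qed.

Local Open Scope ring_scope.
Definition gg (R : fieldType) (x y : nat) : R := if (y < x)%N then 1 else if x == y then 2^-1 else 0.

Lemma gpairE (R : fieldType) n (G : network n) N i j :
  gpair R G N i j = gg R (votes G N i j) (votes G N j i).
Proof. by []. Qed.

Lemma gg_sym (R : realFieldType) x y : gg R x y + gg R y x = 1.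
Proof.
rewrite /gg; case: (ltngtP y x) => h.
- by rewrite addr0.
- by rewrite add0r.
- lra.
Qed.

Lemma gg_ge0 (R : realFieldType) x y : 0 <= gg R x y.
Proof. by rewrite /gg; case: ifP => _ //; case: ifP => _ //; rewrite invr_ge0 ler0n. Qed.

Lemma gg_pair (R : realFieldType) (x1 y1 x2 y2 m : nat) :
  (x1 + y1 = m)%N -> (x2 + y2 = m)%N -> (y1 + y2 <= m)%N ->
  1 + (~~ ((m <= 2 * y2) || (m <= 2 * y1)))%N%:R <= gg R x1 y1 + gg R x2 y2.
Proof.
move=> h1 h2 h3.
have g1 := gg_ge0 R x1 y1. have g2 := gg_ge0 R x2 y2.
case: (ltnP y1 x1) => c1; case: (ltnP y2 x2) => c2.
- rewrite /gg c1 c2; case: (_ || _) => /=; lra.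
- have -> : (m <= 2 * y2)%N by lia.
  have E1 : gg R x1 y1 = 1 by rewrite /gg c1.
  rewrite /= E1; lra.
- have -> : (m <= 2 * y1)%N by lia.
  have E2 : gg R x2 y2 = 1 by rewrite /gg c2.
  rewrite orbT /= E2; lra.
- have e1 : x1 = y1 by lia.
  have e2 : x2 = y2 by lia.
  have -> : (m <= 2 * y1)%N by lia.
  rewrite orbT /= /gg e1 e2 !ltnn !eqxx addr0.
  lra.
Qed.

Lemma TF_pair (R : realFieldType) n (G : network n) i j : i != j ->
  1 + (~~ badr G i j)%:R <= gpair R G [set i] i j + gpair R G [set j] j i.
Proof.
move=> ij.
have ji : j != i by rewrite eq_sym.
have i1 : i \in [set i] by rewrite set11.
have j1 : j \notin [set i] by rewrite in_set1.
have j2 : j \in [set j] by rewrite set11.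
have i2 : i \notin [set j] by rewrite in_set1.
have Y1 := votes_TF1 G i1 j1.
have Y2 := votes_TF1 G j2 i2.
have h1 := votes_TF2 G i1 j1 ij.
have h2 := votes_TF2 G j2 i2 ji.
have h3 : (#|Aset G i j| <= votes G [set i] i j)%N.
  apply: subset_leq_card; apply/subsetP => l; rewrite !inE (levTF G l i1 j1).1.
  by case/andP => -> /ltnW.
rewrite !gpairE /badr ij /domi -Y1 -Y2 /=.
apply: gg_pair => //.
rewrite -h1 Y1 Y2 addnC leq_add2r //.
Qed.

Lemma inner_sum (R : realFieldType) n (q : R) (G : network n) (i j : 'I_n) : i != j ->
  \sum_(N : {set 'I_n}) probN q N * ((i \in N)%:R * gpair R G N i j)
  = q ^+ 2 * gpair R G [set i; j] i j + q * (1 - q) * gpair R G [set i] i j.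
Proof.
move=> ij.
set TT := gpair R G [set i; j] i j. set TF := gpair R G [set i] i j.
have pt : forall N : {set 'I_n}, (i \in N)%:R * gpair R G N i j =
    (((i \in N) == true) && ((j \in N) == true))%:R * TT
    + (((i \in N) == true) && ((j \in N) == false))%:R * TF.
  move=> N; case iN: (i \in N); case jN: (j \in N); rewrite /= ?mul0r ?mul1r ?addr0 ?add0r //.
    rewrite /TT; apply: gpair_dep; by rewrite ?iN ?jN !inE eqxx ?orbT.
  rewrite /TF; apply: gpair_dep; rewrite ?iN ?jN !inE ?eqxx //.
  by rewrite eq_sym (negbTE ij).
under eq_bigr do rewrite pt mulrDr.
rewrite big_split /=.
under eq_bigr do rewrite mulrA.
under [X in _ + X]eq_bigr do rewrite mulrA.
by rewrite -!big_distrl /= !marginal // /wq expr2.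
Qed.

Lemma swap_sum (R : realFieldType) n (F : 'I_n -> 'I_n -> R) :
  \sum_(i : 'I_n) \sum_(j | j != i) F i j = \sum_(i : 'I_n) \sum_(j | j != i) F j i.
Proof.
transitivity (\sum_(i : 'I_n) \sum_(j : 'I_n) (if j != i then F i j else 0)).
  by apply: eq_bigr => i _; rewrite big_mkcond.
rewrite exchange_big /=; apply: eq_bigr => j _; rewrite [RHS]big_mkcond.
by apply: eq_bigr => i _; rewrite eq_sym.
Qed.

Lemma count_pairs (R : realFieldType) n :
  \sum_(i : 'I_n) \sum_(j | j != i) (1 : R) = n%:R * (n%:R - 1).
Proof.
case: n => [|n]; first by rewrite big_ord0 mul0r.
under eq_bigr => i _ do rewrite sumr_const.
have C : forall i : 'I_n.+1, #|[pred j : 'I_n.+1 | j != i]| = n.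
  by move=> i; rewrite (eq_card (B := predC1 i)) ?cardC1 ?card_ord // => x; rewrite !inE.
under eq_bigr => i _ do rewrite C.
rewrite sumr_const card_ord.
have -> : (n.+1%:R - 1 : R) = n%:R by rewrite -addn1 natrD addrK.
by rewrite -mulrnA natrM mulrC.
Qed.

Lemma count_bad (R : realFieldType) n (G : network n) :
  \sum_(i : 'I_n) \sum_(j | j != i) ((badr G i j)%:R : R)
  = (\sum_(i : 'I_n) #|[set j | badr G i j]|)%:R.
Proof.
rewrite natr_sum; apply: eq_bigr => i _.
rewrite -sum1_card natr_sum big_mkcond /= [RHS]big_mkcond /=.
apply: eq_bigr => j _; rewrite !inE.
case: (eqVneq j i) => [->|ji] /=; first by rewrite /badr eqxx.
by case: (badr G i j).
Qed.

Lemma PD_expand (R : realFieldType) n (q : R) (G : network n) :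
  PD q G = (2 / (n%:R * (n%:R - 1))) *
    \sum_(i : 'I_n) \sum_(j | j != i)
      (q ^+ 2 * gpair R G [set i; j] i j + q * (1 - q) * gpair R G [set i] i j).
Proof.
rewrite /PD /gD.
under eq_bigr => N _ do rewrite big_mkcond /= big_distrr /=.
rewrite exchange_big /= big_distrr /=; apply: eq_bigr => i _.
have -> : \sum_(j | j != i)
      (q ^+ 2 * gpair R G [set i; j] i j + q * (1 - q) * gpair R G [set i] i j)
    = \sum_(j | j != i) \sum_(N : {set 'I_n}) probN q N * ((i \in N)%:R * gpair R G N i j).
  by apply: eq_bigr => j ji; rewrite inner_sum // eq_sym.
rewrite exchange_big /= big_distrr /=; apply: eq_bigr => N _.
case: (boolP (i \in N)) => iN.
  rewrite mulrCA [X in _ * X = _]big_distrr /=; congr (_ * _).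
  by apply: eq_bigr => j _; rewrite mul1r.
rewrite mulr0 big1 ?mulr0 // => j _; by rewrite mul0r mulr0.
Qed.
Lemma sum2_distr (R : realFieldType) n (c : R) (F : 'I_n -> 'I_n -> R) :
  \sum_(i : 'I_n) \sum_(j | j != i) c * F i j = c * \sum_(i : 'I_n) \sum_(j | j != i) F i j.
Proof. rewrite big_distrr /=; apply: eq_bigr => i _; by rewrite big_distrr. Qed.

Unset Implicit Arguments.

Theorem proposition4 (R : realFieldType) (n : nat) (q : R) (G : network n) :
  (3 <= n)%N -> 0 < q -> q < 1 ->
  symmetric_network G -> structurally_balanced G ->
  q + q * (1 - q) * ((3 * n%:R - 8) / (8 * (n%:R - 1))) <= PD q G.
Proof.
move=> n3 q0 q1 sy sb.
rewrite PD_expand.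
under eq_bigr => i _ do rewrite big_split /=.
rewrite big_split /=.
rewrite !sum2_distr.
set K := n%:R * (n%:R - 1).
set STT := \sum_(i : 'I_n) \sum_(j | j != i) gpair R G [set i; j] i j.
set STF := \sum_(i : 'I_n) \sum_(j | j != i) gpair R G [set i] i j.
have hTT : STT = K / 2.
  have : STT + STT = K.
    rewrite {2}/STT swap_sum /STT -big_split /= /K -(count_pairs R n).
    apply: eq_bigr => i _; rewrite -big_split /=; apply: eq_bigr => j ji.
    by rewrite (@gpair_dep R n G [set j; i] [set i; j] j i) ?gpairE ?gg_sym // !inE !eqxx ?orbT.
  move=> h; rewrite -h; lra.
set B := (\sum_(i : 'I_n) #|[set j | badr G i j]|)%N.
have hB : 8 * (B%:R : R) <= 5 * n%:R ^+ 2.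
  have := bad_bound n3 sy sb; rewrite -/B -(ler_nat R) natrM natrM natrX.
  by [].
have hTF : 2 * K - B%:R <= STF + STF.
  rewrite {2}/STF swap_sum /STF -big_split /=.
  have -> : 2 * K - B%:R = \sum_(i : 'I_n) \sum_(j | j != i) (1 + (~~ badr G i j)%:R : R).
    rewrite /K -(count_pairs R n) /B -count_bad -sum2_distr -sumrB.
    apply: eq_bigr => i _; rewrite -sumrB; apply: eq_bigr => j _.
    by case: (badr G i j); rewrite /= ?addr0 ?mulr1 ?subrr; lra.
  apply: ler_sum => i _; rewrite -big_split /=; apply: ler_sum => j ji; by apply: TF_pair; rewrite eq_sym.
rewrite hTT.
set N := (n%:R : R).
have N3 : (3 : R) <= N by rewrite /N (ler_nat R 3 n).
have N0 : N != 0 by apply/eqP => h; rewrite h in N3; lra.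
have N1 : N - 1 != 0 by apply/eqP => h; lra.
have Kpos : 0 < K by rewrite /K; apply: mulr_gt0; lra.
have qq : 0 <= q * (1 - q) by apply: mulr_ge0; lra.
set Bn := (B%:R : R) in hB hTF *.
apply: (le_trans (y := 2 / K * (q ^+ 2 * (K / 2) + q * (1 - q) * ((2 * K - Bn) / 2)))).
  rewrite -subr_ge0.
  have -> : 2 / K * (q ^+ 2 * (K / 2) + q * (1 - q) * ((2 * K - Bn) / 2)) -
     (q + q * (1 - q) * ((3 * N - 8) / (8 * (N - 1))))
     = q * (1 - q) * (5 * N ^+ 2 - 8 * Bn) / (8 * K).
    by rewrite /K; field; apply/andP; split.
  apply: divr_ge0; last by lra.
  apply: mulr_ge0 => //; lra.
apply: ler_wpM2l; first by apply: divr_ge0; lra.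
rewrite lerD2l; apply: ler_wpM2l => //; lra.
Qed.
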